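(* There exists a constant $C \geq 1$ such that \[ \sum_{q=1}^Q \mathbf{1}_{R_q} \leq C K\Bigl(1 \vee \frac{\|x\|_\infty}{t}\Bigr). \]
   Context: Let $d \geq 2$. Let $\omega=(\omega(x))_{x \in \mathbb{Z}^d}$ be independent random variables with a common law on $\mathbb{N}_0$, not concentrated at $0$. Independently of $\omega$, let $(S_k(x,\ell))_{k \geq 0}$, $x \in \mathbb{Z}^d$, $\ell \in \mathbb{N}$, be independent simple random walks on $\mathbb{Z}^d$ with $S_0(x,\ell)=x$. For $x,y \in \mathbb{Z}^d$ let $\tau(x,y):=\inf\{k \geq 0: S_k(x,\ell)=y \text{ for some } 1 \leq \ell \leq \omega(x)\}$ ($:=\infty$ if $\omega(x)=0$). Let $C_0\in(0,\infty)$ be a constant for which there are $0<c,c'<\infty$, $0<a<1$ with $P(T(0,x)\ge s\mid\omega(0)\ge 1)\le c\,e^{-c's^{a}}$ for all $x\in\mathbb{Z}^d$ and $s\ge C_0\|x\|_1$, where $T(x,y):=\inf\{\sum_{i=0}^{m-1}\tau(x_i,x_{i+1}): m \geq 1,\ x=x_0,\dots,x_m=y\}$. Fix $\gamma>0$ and a constant $K>d(C_0+\gamma+1)$. For $t>0$ define $\sigma_t(x,y)$ by: $\sigma_t(x,y):=4Kt$ if $\|x-y\|_\infty\le t$ and $\tau(x,y)>4Kt$; $\sigma_t(x,y):=4K\|x-y\|_\infty$ if $\|x-y\|_\infty>t$; $\sigma_t(x,y):=\tau(x,y)$ otherwise; and $T_t(x,y):=\inf\{\sum_{i=0}^{m-1}\sigma_t(x_i,x_{i+1}):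 m\ge 1,\ x=x_0,\dots,x_m=y\}$. Fix $x\in\mathbb{Z}^d\setminus\{0\}$ and $t>0$. Tile $\mathbb{Z}^d$ with copies $\Lambda_q$, $q\in\mathbb{N}$, of $(-t/2,t/2]^d$, each centered at a point of $\mathbb{Z}^d$, so that each site lies in exactly one box, numbered so that $T_t(0,x)$ depends only on the configuration ($\omega$ and the walks started) in $\Lambda_1,\dots,\Lambda_Q$ for some finite $Q$. Let $\pi_t(0,x)=(0=x_0,x_1,\dots,x_m=x)$ be a sequence with $T_t(0,x)=\sum_{i=0}^{m-1}\sigma_t(x_i,x_{i+1})$, chosen by a deterministic tie-breaking rule, and let $R_q$ be the event that $\pi_t(0,x)$ intersects $\Lambda_q$. The constant $C$ does not depend on $x$, $t$ or the configuration. *)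

(* Defs.v *)
From HB Require Import structures.
From mathcomp Require Import all_boot all_order all_algebra.
From mathcomp Require Import all_classical all_reals ereal.
Set Implicit Arguments.
Unset Strict Implicit.
Unset Printing Implicit Defensive.
Import Order.TTheory GRing.Theory Num.Theory.
Local Open Scope classical_set_scope.
Local Open Scope ring_scope.

Definition site (d : nat) := 'I_d -> int.
Definition site0 (d : nat) : site d := fun _ => 0.
Arguments site0 d : clear implicits.

Definition dist_inf (d : nat) (a b : site d) : nat :=
  \max_(i < d) `|a i - b i|%N.

Definition nn_step (d : nat) (a b : site d) : Prop :=
  (\sum_(i < d) `|a i - b i|%N)%N = 1%N.

(* S x l = (S_k(x,l))_k is a simple-random-walk path started at x, l >= 1. *)
Definition walk_family (d : nat) (S : site d -> nat -> nat -> site d) : Prop :=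
  forall x l, (1 <= l)%N ->
    S x l 0%N = x /\ forall k, nn_step (S x l k) (S x l k.+1).

Section Passage.
Variables (R : realType) (d : nat).
Variables (K t : R) (om : site d -> nat) (S : site d -> nat -> nat -> site d).

Definition tau (x y : site d) : \bar R :=
  ereal_inf [set (k%:R)%:E | k in
    [set k : nat | exists l, (1 <= l <= om x)%N /\ S x l k = y]].

Definition sigma_t (x y : site d) : R :=
  let n : R := (dist_inf x y)%:R in
  if t < n then 4 * K * n
  else if ((4 * K * t)%:E < tau x y)%E then 4 * K * t
  else fine (tau x y).

(* a sequence x = x_0, x_1, ..., x_m = y with m >= 1 is written x :: s *)
Definition is_path (x : site d) (s : seq (site d)) (y : site d) : Prop :=
  (0 < size s)%N /\ last x s = y.

Definition path_cost (x : site d) (s : seq (site d)) : R :=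
  \sum_(c <- pairmap sigma_t x s) c.

Definition T_t (x y : site d) : R :=
  inf [set c | exists s, is_path x s y /\ c = path_cost x s].

End Passage.

Definition in_box (R : realType) (d : nat) (t : R) (c z : site d) : Prop :=
  forall i, (c i)%:~R - t / 2 < (z i)%:~R :> R /\ (z i)%:~R <= (c i)%:~R + t / 2.

Definition path_hits (d : nat) (x : site d) (s : seq (site d)) (L : set (site d))
  : Prop :=
  exists i, (i < (size s).+1)%N /\ L (nth x (x :: s) i).

(* Main.v *)
Require Import Defs.
From HB Require Import structures.
From mathcomp Require Import all_boot all_order all_algebra.
From mathcomp Require Import all_classical all_reals ereal.
From mathcomp.algebra_tactics Require Import ring lra.
Import Order.TTheory GRing.Theory Num.Theory.
Local Open Scope classical_set_scope.
Local Open Scope ring_scope.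

Section Dist.
Variable d : nat.
Implicit Types a b c : site d.

Lemma dist_coord a b (i : 'I_d) : (`|a i - b i|%N <= dist_inf a b)%N.
Proof. exact: (leq_bigmax (F := fun i => `|a i - b i|%N)). Qed.

Lemma dist_tri a b c : (dist_inf a c <= dist_inf a b + dist_inf b c)%N.
Proof.
apply/bigmax_leqP => i _.
apply: leq_trans (leqD_dist (a i) (b i) (c i)) _.
by apply: leq_add; apply: dist_coord.
Qed.

Lemma dist_sym a b : dist_inf a b = dist_inf b a.
Proof. by apply: eq_bigr => i _; rewrite distnC. Qed.

Lemma dist_self a : dist_inf a a = 0%N.
Proof.
apply/eqP; rewrite -leqn0; apply/bigmax_leqP => i _.
by rewrite subrr.
Qed.

Lemma nn_dist a b : nn_step a b -> (dist_inf a b <= 1)%N.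
Proof.
rewrite /nn_step => H; apply/bigmax_leqP => i _.
rewrite -H (bigD1 i) //=; exact: leq_addr.
Qed.

Lemma walk_dist (S : site d -> nat -> nat -> site d) x l k :
  walk_family S -> (1 <= l)%N -> (dist_inf (S x l k) x <= k)%N.
Proof.
move=> W hl; have [H0 Hs] := W x l hl.
elim: k => [|k IH]; first by rewrite H0 dist_self.
apply: leq_trans (dist_tri _ (S x l k) _) _.
rewrite dist_sym addnC -addn1; apply: leq_add => //; rewrite addn1; exact: nn_dist (Hs k).
Qed.
End Dist.

Section Sig.
Variables (R : realType) (d : nat) (K t : R) (om : site d -> nat)
  (S : site d -> nat -> nat -> site d).
Hypotheses (W : walk_family S) (K1 : 1 <= K) (t0 : 0 < t).

Lemma tau_ge x y : ((dist_inf x y)%:R%:E <= tau R om S x y)%E.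
Proof.
apply/ereal_infP => _ [k [l [hl <-]] <-].
rewrite lee_fin ler_nat dist_sym; apply: walk_dist => //.
by case/andP: hl.
Qed.

Lemma sigma_ge x y : (dist_inf x y)%:R <= sigma_t K t om S x y.
Proof.
have k1 := K1; have t1 := t0.
rewrite /sigma_t; set n : R := (dist_inf x y)%:R.
have n0 : 0 <= n by rewrite /n ler0n.
have ht : (n%:E <= tau R om S x y)%E by exact: tau_ge.
clearbody n.
case: ifP => h1.
  rewrite -[X in X <= _]mul1r; by apply: ler_wpM2r => //; lra.
case: ifP => h2.
  have : n <= t by rewrite leNgt h1.
  move=> nt; apply: (le_trans nt); rewrite -[X in X <= _]mul1r; apply: ler_wpM2r; lra.
move: h2 ht; case: (tau R om S x y) => [r| |] //=.
by rewrite ltry.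
Qed.

Lemma sigma_ge0 x y : 0 <= sigma_t K t om S x y.
Proof. exact: le_trans (ler0n _ _) (sigma_ge x y). Qed.

Lemma sigma_le x y M : 1 <= M -> (dist_inf x y)%:R / t <= M ->
  sigma_t K t om S x y <= 4 * K * t * M.
Proof.
move=> M1 hM.
have k1 := K1; have t1 := t0.
rewrite /sigma_t; set n : R := (dist_inf x y)%:R.
have n0 : 0 <= n by rewrite /n ler0n.
have ht : (n%:E <= tau R om S x y)%E by exact: tau_ge.
have hn : n <= t * M by rewrite /n mulrC -ler_pdivrMr.
clearbody n.
have Kt : 0 <= 4 * K * t by apply: mulr_ge0; lra.
have KtM : 4 * K * t <= 4 * K * t * M.
  by rewrite -[X in X <= _]mulr1; apply: ler_wpM2l.
case: ifP => h1.
  have -> : 4*K*t*M = 4*K*(t*M) by ring.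
  by apply: ler_wpM2l => //; lra.
case: ifP => h2; first by [].
move: h2 ht; case: (tau R om S x y) => [r| |] //=.
  rewrite lte_fin lee_fin => h2 h3.
have : r <= 4 * K * t by rewrite leNgt h2.
  move=> h; exact: le_trans h KtM.
by rewrite ltry.
Qed.

End Sig.

Lemma pairmap_sum (R : realType) (T : Type) (f : T -> T -> R) (x z : T) s :
  \sum_(c <- pairmap f x s) c =
  \sum_(j < size s) f (nth z (x :: s) j) (nth z (x :: s) j.+1).
Proof.
elim: s x => [|y s IH] x /=; first by rewrite big_nil big_ord0.
by rewrite big_cons big_ord_recl /= IH.
Qed.

Lemma sum_indic (R : realType) (T : Type) (b : pred T) (r : seq T) :
  \sum_(i <- r) (if b i then 1 else 0 : R) = (count b r)%:R.
Proof.
elim: r => [|y r IH]; first by rewrite big_nil.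
by rewrite big_cons IH /=; case: (b y); rewrite ?add0r // natrD.
Qed.

Definition vtx {d : nat} (pi : seq (site d)) j := nth (site0 d) (site0 d :: pi) j.
Definition arc {d : nat} (pi : seq (site d)) i :=
  (\sum_(j < i) dist_inf (vtx pi j) (vtx pi j.+1))%N.

Section Arc.
Variables (d : nat) (pi : seq (site d)).

Lemma arcS i : arc pi i.+1 = (arc pi i + dist_inf (vtx pi i) (vtx pi i.+1))%N.
Proof. by rewrite /arc big_ord_recr. Qed.

Lemma arc_dist i k :
  (dist_inf (vtx pi i) (vtx pi (i + k)) + arc pi i <= arc pi (i + k))%N.
Proof.
elim: k => [|k IH]; first by rewrite addn0 dist_self.
rewrite addnS arcS.
apply: (@leq_trans (dist_inf (vtx pi i) (vtx pi (i + k)) +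
   dist_inf (vtx pi (i + k)) (vtx pi (i + k).+1) + arc pi i)).
  by rewrite leq_add2r dist_tri.
by rewrite addnAC leq_add2r.
Qed.

Lemma arc_dist2 i j : (i <= j)%N ->
  (dist_inf (vtx pi i) (vtx pi j) + arc pi i <= arc pi j)%N.
Proof. by move=> hij; rewrite -(subnKC hij) arc_dist. Qed.

Lemma arc_mono i j : (i <= j)%N -> (arc pi i <= arc pi j)%N.
Proof. move=> hij; apply: leq_trans _ (arc_dist2 _ _ hij); exact: leq_addl. Qed.
End Arc.

Section Cost.
Variables (R : realType) (d : nat) (K t : R) (om : site d -> nat)
  (S : site d -> nat -> nat -> site d).
Hypotheses (W : walk_family S) (K1 : 1 <= K) (t0 : 0 < t).

Lemma cost_eq pi : path_cost K t om S (site0 d) pi =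
  \sum_(j < size pi) sigma_t K t om S (vtx pi j) (vtx pi j.+1).
Proof. by rewrite /path_cost (pairmap_sum _ _ _ _ (site0 d)). Qed.

Lemma cost_ge pi : (arc pi (size pi))%:R <= path_cost K t om S (site0 d) pi.
Proof.
rewrite cost_eq /arc natr_sum; apply: ler_sum => j _.
exact: sigma_ge.
Qed.

Lemma cost_ge0 x s : 0 <= path_cost K t om S x s.
Proof.
rewrite /path_cost (pairmap_sum _ _ _ _ x); apply: sumr_ge0 => j _.
exact: sigma_ge0.
Qed.

Lemma Tt_le x : T_t K t om S (site0 d) x <= sigma_t K t om S (site0 d) x.
Proof.
rewrite /T_t; apply: ge_inf.
  exists 0 => _ [s [_ ->]]; exact: cost_ge0.
exists [:: x]; split; first by split.
by rewrite /path_cost /= big_cons big_nil addr0.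
Qed.
End Cost.

Lemma common (R : realType) (t : R) (a b : int) : 0 < t ->
  `|a%:~R - b%:~R| < Num.max 1 (t / 2) ->
  [/\ a%:~R - t / 2 < (Num.max a b)%:~R :> R, (Num.max a b)%:~R <= a%:~R + t / 2 :> R,
      b%:~R - t / 2 < (Num.max a b)%:~R :> R & (Num.max a b)%:~R <= b%:~R + t / 2 :> R].
Proof.
move=> t0.
wlog ab : a b / a <= b.
  move=> H; case: (boolP (a <= b)) => h; first exact: H.
  rewrite -ltNge in h.
  rewrite distrC (maxC a b) => h'; have [h1 h2 h3 h4] := H b a (ltW h) h'; by split.
rewrite (max_r ab) => hlt.
have abR : a%:~R <= b%:~R :> R by rewrite ler_int.
have hb : b%:~R - t / 2 < b%:~R :> R by lra.
have ha : a%:~R - t / 2 < b%:~R :> R by lra.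
have hle : b%:~R <= a%:~R + t / 2 :> R.
  case: (eqVneq a b) => [->|neq]; first by lra.
  have : a + 1 <= b by rewrite lezD1 lt_neqAle neq.
  rewrite -(ler_int R) intrD => h1.
  move: hlt; rewrite ler0_norm; last by lra.
  rewrite lt_max => /orP[h2|h2]; lra.
by split => //; lra.
Qed.

Theorem lemma4p4 (R : realType) (d : nat) (C0 gamma K : R) :
  (2 <= d)%N -> 0 < C0 -> 0 < gamma -> d%:R * (C0 + gamma + 1) < K ->
  exists C : R, 1 <= C /\
  forall (x : site d) (t : R) (om : site d -> nat)
         (S : site d -> nat -> nat -> site d)
         (Lam : nat -> set (site d)) (Q : nat) (pi : seq (site d)),
    x <> site0 d -> 0 < t -> walk_family S ->
    (forall q, (1 <= q)%N -> exists c : site d, forall z, Lam q z <-> in_box t c z) ->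
    (forall z, exists! q, (1 <= q)%N /\ Lam q z) ->
    is_path (site0 d) pi x ->
    T_t K t om S (site0 d) x = path_cost K t om S (site0 d) pi ->
    \sum_(1 <= q < Q.+1)
        (if `[< path_hits (site0 d) pi (Lam q) >] then 1 else 0 : R)
      <= C * K * Num.max 1 ((dist_inf x (site0 d))%:R / t).
Proof.
move=> d2 C00 g0 hK.
have K1 : 1 <= K.
  have d2R : 2 <= d%:R :> R by rewrite (ler_nat R 2 d).
  have hp : 2 * (C0 + gamma + 1) <= d%:R * (C0 + gamma + 1).
    by apply: ler_wpM2r => //; lra.
  lra.
have e8 : 1 <= (8 ^ d)%:R :> R by rewrite (ler_nat R 1) expn_gt0.
exists (5 * (8 ^ d)%:R); split; first by lra.
move=> x t om S Lam Q pi x0 t0 W Hbox Huniq Hpath Hopt.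
set n : R := (dist_inf x (site0 d))%:R.
set M := Num.max 1 (n / t).
have M1 : 1 <= M by rewrite le_max lexx.
have nM : n / t <= M by rewrite le_max lexx orbT.
set m := size pi.
have hA : (arc pi m)%:R <= 4 * K * t * M.
  apply: le_trans (@cost_ge _ _ K t om S W K1 t0 pi) _.
  rewrite -Hopt; apply: le_trans (@Tt_le _ _ K t om S W K1 t0 x) _.
  by apply: sigma_le => //; rewrite dist_sym.
pose g i := Num.truncn ((arc pi i)%:R / t).
have gle i : (i <= m)%N -> (g i <= g m)%N.
  move=> hi; apply: le_truncn; apply: ler_wpM2r; first by rewrite invr_ge0 ltW.
  by rewrite ler_nat; apply: arc_mono.
have same i j : g i = g j -> (dist_inf (vtx pi i) (vtx pi j))%:R < t.
  wlog ij : i j / (i <= j)%N.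
    move=> H; case: (leqP i j) => h; first exact: H.
    by move=> e; rewrite dist_sym; apply: H (ltnW h) (esym e).
  move=> e.
  have hd := @arc_dist2 d pi i j ij.
  have hdR : (dist_inf (vtx pi i) (vtx pi j))%:R + (arc pi i)%:R <= (arc pi j)%:R :> R.
    by rewrite -natrD ler_nat.
  have ti : 0 <= (arc pi i)%:R / t :> R by apply: divr_ge0 => //; exact: ltW.
  have tj : 0 <= (arc pi j)%:R / t :> R by apply: divr_ge0 => //; exact: ltW.
  have /andP[lo1 hi1] := truncn_itv ti.
  have /andP[lo2 hi2] := truncn_itv tj.
  rewrite /g in e; rewrite e -addn1 natrD in hi1; rewrite e in lo1.
  rewrite -addn1 natrD in hi2.
  have : ((arc pi j)%:R - (arc pi i)%:R) / t < 1 by rewrite mulrBl; lra.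
  rewrite ltr_pdivrMr // mul1r => h; lra.
pose anc gg := vtx pi (find (fun i => g i == gg) (iota 0 m.+1)).
have ancP i : (i <= m)%N -> (dist_inf (vtx pi i) (anc (g i)))%:R < t.
  move=> hi.
  have hh : has (fun k => g k == g i) (iota 0 m.+1).
    by apply/hasP; exists i => //; rewrite mem_iota.
  have := nth_find 0%N hh; have := hh; rewrite has_find size_iota => hf.
  rewrite nth_iota // add0n => /eqP e; apply: same; exact: esym.
have [iq Hiq] : exists iq : nat -> nat, forall q,
    `[< path_hits (site0 d) pi (Lam q) >] -> (iq q <= m)%N /\ Lam q (vtx pi (iq q)).
  have : forall q, exists i, `[< path_hits (site0 d) pi (Lam q) >] ->
      (i <= m)%N /\ Lam q (vtx pi i).
    move=> q; case: (pselect (path_hits (site0 d) pi (Lam q))) => [[i [hi hL]]|hn].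
      by exists i => _; split; rewrite // -ltnS.
    by exists 0%N => /asboolP /hn.
  by case/choice => f Hf; exists f.
have [cq Hcq] : exists cq : nat -> site d, forall q, (1 <= q)%N ->
    forall z, Lam q z <-> in_box t (cq q) z.
  have : forall q, exists c : site d, (1 <= q)%N -> forall z, Lam q z <-> in_box t c z.
    move=> q; case: (boolP (1 <= q)%N) => hq.
      by have [c Hc] := Hbox q hq; exists c.
    by exists (site0 d).
  by case/choice => f Hf; exists f.
pose s := Num.max 1 (t / 2).
have s1 : 1 <= s by rewrite le_max lexx.
have s2 : t / 2 <= s by rewrite le_max lexx orbT.
have s0 : 0 < s by lra.
pose u q (k : 'I_d) := ((cq q k)%:~R - (anc (g (iq q)) k)%:~R + 2 * t) / s.
pose f q : 'I_(g m).+1 * {ffun 'I_d -> 'I_8} :=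
  (inord (g (iq q)), [ffun k => inord (Num.truncn (u q k))]).
pose P q := `[< path_hits (site0 d) pi (Lam q) >].
have ub q k : (1 <= q)%N -> P q -> 0 <= u q k /\ u q k < 8.
  move=> q1 Pq; have [hi hL] := Hiq q Pq.
  have hb := (Hcq q q1 _).1 hL.
  have [hb1 hb2] := hb k.
  have ha := ancP _ hi.
  have hc : `|(vtx pi (iq q) k)%:~R - (anc (g (iq q)) k)%:~R| < t :> R.
    apply: le_lt_trans ha; rewrite -intrB -intr_norm -natr_absz ler_nat; exact: dist_coord.
  move: hc; rewrite ltr_norml => /andP[hc1 hc2].
  rewrite /u; split.
    by apply: divr_ge0; lra.
  by rewrite ltr_pdivrMr //; lra.
have inj : {in seq.filter P (index_iota 1 Q.+1) &, injective f}.
  move=> q q'; rewrite !mem_filter !mem_index_iota.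
  move=> /andP[Pq /andP[q1 _]] /andP[Pq' /andP[q1' _]].
  case=> /(congr1 (@nat_of_ord _)) eg /ffunP ec.
  have [hi _] := Hiq q Pq; have [hi' _] := Hiq q' Pq'.
  rewrite !inordK ?ltnS ?gle // in eg.
  have hdiff k : `|(cq q k)%:~R - (cq q' k)%:~R| < s :> R.
    have := ec k; rewrite !ffunE => /(congr1 (@nat_of_ord _)).
    have [u0 u8] := ub q k q1 Pq; have [u0' u8'] := ub q' k q1' Pq'.
    have t8 : (Num.truncn (u q k) < 8)%N by rewrite ltnS truncn_le_nat.
    have t8' : (Num.truncn (u q' k) < 8)%N by rewrite ltnS truncn_le_nat.
    rewrite !inordK // => etr.
    have /andP[lo1 hi1] := truncn_itv u0.
    have /andP[lo2 hi2] := truncn_itv u0'.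
    rewrite etr -addn1 natrD in hi1; rewrite etr in lo1.
    rewrite -addn1 natrD in hi2.
    have e2 : u q k - u q' k = ((cq q k)%:~R - (cq q' k)%:~R) / s.
      by rewrite /u eg -mulrBl; congr (_ * _); ring.
    have : `|u q k - u q' k| < 1 by rewrite ltr_norml; apply/andP; split; lra.
    have si : 0 <= s^-1 by rewrite invr_ge0 ltW.
    by rewrite e2 normrM (ger0_norm si) ltr_pdivrMr // mul1r.
  pose z := fun k => Num.max (cq q k) (cq q' k).
  have Lz : Lam q z.
    by apply/(Hcq q q1 z) => k; have [h1 h2 h3 h4] := @common R t _ _ t0 (hdiff k); split.
  have Lz' : Lam q' z.
    by apply/(Hcq q' q1' z) => k; have [h1 h2 h3 h4] := @common R t _ _ t0 (hdiff k); split.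
  have [q0 [_ U]] := Huniq z.
  by rewrite -(U q (conj q1 Lz)) (U q' (conj q1' Lz')).
rewrite (@sum_indic R nat P).
have hc : (count P (index_iota 1 Q.+1) <= (g m).+1 * 8 ^ d)%N.
  rewrite -size_filter -(size_map f).
  have U : uniq (map f (seq.filter P (index_iota 1 Q.+1))).
    by rewrite map_inj_in_uniq // filter_uniq // /index_iota iota_uniq.
  move/card_uniqP: U => <-.
  apply: leq_trans (max_card _) _.
  by rewrite card_prod card_ffun !card_ord.
apply: (@le_trans _ _ (((g m).+1 * 8 ^ d)%:R)); first by rewrite ler_nat.
rewrite natrM.
have hg : ((g m).+1)%:R <= 5 * K * M :> R.
  have h1 : (g m)%:R <= (arc pi m)%:R / t.
    by rewrite truncn_le divr_ge0 // ltW.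
  have h2 : (arc pi m)%:R / t <= 4 * K * M.
    by rewrite ler_pdivrMr // (_ : 4 * K * M * t = 4 * K * t * M) //; ring.
  have KM : 1 <= K * M by apply: mulr_ege1.
  rewrite -addn1 natrD; lra.
have -> : 5 * (8 ^ d)%:R * K * M = (5 * K * M) * (8 ^ d)%:R by ring.
by apply: ler_wpM2r => //; exact: ler0n.
Qed.
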